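(* Let $A,B,C$ be finite-dimensional quantum systems, $C'$ a copy of $C$, and let $\Lambda^{C\to AB}$ be a channel extension of a channel $\Lambda^{C\to B}$. Then $\Lambda^{C\to AB}$ is an incoherent extension of $\Lambda^{C\to B}$ if and only if the Choi–Jamiołkowski state $J_{C'AB}(\Lambda^{C\to AB})$ is separable with respect to the bipartition $A : BC'$.
   Context: A channel extension of $\Lambda^{C\to B}$ is a channel (completely positive trace-preserving map) $\Lambda^{C\to AB}$ with $\mathrm{Tr}_A\circ\Lambda^{C\to AB}=\Lambda^{C\to B}$. An instrument is a collection $\{\Lambda_\lambda\}_\lambda$ of completely positive maps whose sum is a channel. The extension is incoherent if there exist an instrument $\{\Lambda^{C\to B}_\lambda\}_\lambda$ and unit-trace density operators $\{\sigma^A_\lambda\}_\lambda$ such that $\Lambda^{C\to AB}[X]=\sum_\lambda\Lambda^{C\to B}_\lambda[X]\otimes\sigma^A_\lambda$ for all $X$. The Choi–Jamiołkowski operator of a map $\Gamma^{C\to Y}$ is $J_{C'Y}(\Gamma)=(\mathrm{id}_{C'}\otimes\Gamma)[\psi_+^{CC'}]$, where $\psi_+^{CC'}$ is a fixed maximally entangled pure state of $C$ and $C'$. A state on $A\otimes(BC')$ is $A:BC'$-separable if it is a convex combination of product states $\tau^A\otimes\omega^{BC'}$. *)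

(* Defs.v *)
From HB Require Import structures.
From mathcomp Require Import all_boot all_order all_algebra.
From mathcomp Require Import complex mxtens.
From mathcomp Require Import reals.
Set Implicit Arguments.
Unset Strict Implicit.
Unset Printing Implicit Defensive.
Import Order.TTheory GRing.Theory Num.Theory.
Local Open Scope ring_scope.

Section Quantum.
Variable C : numClosedFieldType.

Definition adjmx m n (A : 'M[C]_(m, n)) : 'M[C]_(n, m) := (map_mx Num.conj A)^T.

Definition psdmx n (A : 'M[C]_n) : Prop :=
  adjmx A = A /\ forall v : 'rV[C]_n, 0 <= (v *m A *m adjmx v) 0 0.

Definition density n (A : 'M[C]_n) : Prop := psdmx A /\ \tr A = 1.

(* The (i,k) block of an operator on K (x) M (first tensor factor = outer index) *)
Definition blockmx k m (X : 'M[C]_(k * m)) (a c : 'I_k) : 'M[C]_m :=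
  \matrix_(b, d) X (mxtens_index (a, b)) (mxtens_index (c, d)).

Definition id_tens k m n (G : 'M[C]_m -> 'M[C]_n) (X : 'M[C]_(k * m))
  : 'M[C]_(k * n) :=
  \matrix_(i, j) G (blockmx X (mxtens_unindex i).1 (mxtens_unindex j).1)
                     (mxtens_unindex i).2 (mxtens_unindex j).2.

Definition is_linear_map m n (G : 'M[C]_m -> 'M[C]_n) : Prop :=
  forall (a : C) (X Y : 'M[C]_m), G (a *: X + Y) = a *: G X + G Y.

Definition cp_map m n (G : 'M[C]_m -> 'M[C]_n) : Prop :=
  is_linear_map G /\
  forall (k : nat) (X : 'M[C]_(k * m)), psdmx X -> psdmx (id_tens G X).

Definition trace_preserving m n (G : 'M[C]_m -> 'M[C]_n) : Prop :=
  forall X, \tr (G X) = \tr X.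

Definition channel m n (G : 'M[C]_m -> 'M[C]_n) : Prop :=
  cp_map G /\ trace_preserving G.

Definition ptrace1 dA dB (X : 'M[C]_(dA * dB)) : 'M[C]_dB :=
  \matrix_(b, b') \sum_(a < dA) X (mxtens_index (a, b)) (mxtens_index (a, b')).

Definition instrument (I : finType) m n (L : I -> 'M[C]_m -> 'M[C]_n) : Prop :=
  (forall i, cp_map (L i)) /\ channel (fun X => \sum_(i : I) L i X).

Definition channel_extension dA dB dC
  (Lab : 'M[C]_dC -> 'M[C]_(dA * dB)) (Lb : 'M[C]_dC -> 'M[C]_dB) : Prop :=
  channel Lab /\ forall X, ptrace1 (Lab X) = Lb X.

Definition incoherent_extension dA dB dC
  (Lab : 'M[C]_dC -> 'M[C]_(dA * dB)) : Prop :=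
  exists (I : finType) (L : I -> 'M[C]_dC -> 'M[C]_dB) (sigma : I -> 'M[C]_dA),
    instrument L /\ (forall i, density (sigma i)) /\
    forall X, Lab X = \sum_(i : I) (sigma i *t L i X).

Definition psi_plus d : 'M[C]_(d * d) :=
  \matrix_(i, j) if ((mxtens_unindex i).1 == (mxtens_unindex i).2) &&
                    ((mxtens_unindex j).1 == (mxtens_unindex j).2)
                 then (d%:R)^-1 else 0.

Definition choi m n (G : 'M[C]_m -> 'M[C]_n) : 'M[C]_(m * n) :=
  id_tens G (psi_plus m).

(* tau^A (x) omega^{BC'} written on C' (x) (A (x) B), omega on C' (x) B *)
Definition prod_A_BCp dC dA dB (tau : 'M[C]_dA) (omega : 'M[C]_(dC * dB))
  : 'M[C]_(dC * (dA * dB)) :=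
  \matrix_(i, j)
    let c  := (mxtens_unindex i).1 in
    let a  := (mxtens_unindex (mxtens_unindex i).2).1 in
    let b  := (mxtens_unindex (mxtens_unindex i).2).2 in
    let c' := (mxtens_unindex j).1 in
    let a' := (mxtens_unindex (mxtens_unindex j).2).1 in
    let b' := (mxtens_unindex (mxtens_unindex j).2).2 in
    tau a a' * omega (mxtens_index (c, b)) (mxtens_index (c', b')).

Definition separable_A_BCp dC dA dB (rho : 'M[C]_(dC * (dA * dB))) : Prop :=
  exists (I : finType) (p : I -> C) (tau : I -> 'M[C]_dA)
         (omega : I -> 'M[C]_(dC * dB)),
    (forall i, 0 <= p i) /\ \sum_(i : I) p i = 1 /\
    (forall i, density (tau i) /\ density (omega i)) /\
    rho = \sum_(i : I) p i *: prod_A_BCp (tau i) (omega i).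

End Quantum.

(* Main.v *)
Require Import Defs.
From HB Require Import structures.
From mathcomp Require Import all_boot all_order all_algebra.
From mathcomp Require Import complex mxtens.
From mathcomp Require Import reals.
From mathcomp Require Import ring zify.
Set Implicit Arguments.
Unset Strict Implicit.
Unset Printing Implicit Defensive.
Import Order.TTheory GRing.Theory Num.Theory.
Local Open Scope ring_scope.
Section Q.
Variable C : numClosedFieldType.

Lemma sum_tens m n (F : 'I_(m * n) -> C) :
  \sum_(k < m * n) F k = \sum_(a < m) \sum_(b < n) F (mxtens_index (a, b)).
Proof.
rewrite pair_big /= (reindex (@mxtens_index m n)) /=.
  by apply: eq_bigr => -[a b] _.
by exists (@mxtens_unindex m n) => i _; rewrite (mxtens_indexK, mxtens_unindexK).
Qed.

Lemma adjmxE m n (A : 'M[C]_(m, n)) i j : adjmx A i j = (A j i)^*.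
Proof. by rewrite !mxE. Qed.

Section Lin.
Variables (m n : nat) (G : 'M[C]_m -> 'M[C]_n).
Hypothesis HG : is_linear_map G.
Lemma lin0 : G 0 = 0.
Proof.
have := HG 1 0 0; rewrite !scale1r addr0 => h.
have: G 0 + G 0 - G 0 = G 0 - G 0 by rewrite -h.
by rewrite addrK subrr.
Qed.
Lemma linD X Y : G (X + Y) = G X + G Y.
Proof. by have := HG 1 X Y; rewrite !scale1r. Qed.
Lemma linZ a X : G (a *: X) = a *: G X.
Proof. by have := HG a X 0; rewrite !addr0 lin0 addr0. Qed.
Lemma lin_sum (I : finType) (F : I -> 'M[C]_m) :
  G (\sum_i F i) = \sum_i G (F i).
Proof.
apply: (big_ind2 (fun x y => G x = y)); [exact: lin0| |by []].
by move=> x1 x2 y1 y2 <- <-; rewrite linD.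
Qed.
End Lin.


Lemma adjmxM m n p (A : 'M[C]_(m, n)) (B : 'M[C]_(n, p)) :
  adjmx (A *m B) = adjmx B *m adjmx A.
Proof. by rewrite /adjmx map_mxM trmx_mul. Qed.

Lemma adjmxK m n (A : 'M[C]_(m, n)) : adjmx (adjmx A) = A.
Proof. by apply/matrixP => i j; rewrite !mxE conjCK. Qed.

Lemma adjmxD m n (A B : 'M[C]_(m, n)) : adjmx (A + B) = adjmx A + adjmx B.
Proof. by apply/matrixP => i j; rewrite !mxE rmorphD. Qed.

Lemma adjmxZ m n a (A : 'M[C]_(m, n)) : adjmx (a *: A) = a^* *: adjmx A.
Proof. by apply/matrixP => i j; rewrite !mxE rmorphM. Qed.

Lemma adjmx_sum m n (I : finType) (F : I -> 'M[C]_(m, n)) :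
  adjmx (\sum_i F i) = \sum_i adjmx (F i).
Proof.
apply: (big_ind2 (fun x y => adjmx x = y)) => //.
- by apply/matrixP => i j; rewrite !mxE rmorph0.
- by move=> x1 x2 y1 y2 <- <-; rewrite adjmxD.
Qed.

Lemma qformE n (x y : 'rV[C]_n) (A : 'M[C]_n) :
  (x *m A *m adjmx y) 0 0 = \sum_j \sum_k x 0 j * A j k * (y 0 k)^*.
Proof.
rewrite !mxE exchange_big /=; apply: eq_bigr => k _.
rewrite !mxE mulr_suml; apply: eq_bigr => j _; rewrite ?mxE //.
Qed.

Lemma rowform_ge0 n (w : 'rV[C]_n) : 0 <= (w *m adjmx w) 0 0.
Proof.
rewrite !mxE; apply: sumr_ge0 => k _; rewrite !mxE; exact: mul_conjC_ge0.
Qed.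

Lemma psd_adj m n (U : 'M[C]_(m, n)) : psdmx (adjmx U *m U).
Proof.
split; first by rewrite adjmxM adjmxK.
move=> v.
have -> : v *m (adjmx U *m U) *m adjmx v = (v *m adjmx U) *m adjmx (v *m adjmx U)
  by rewrite adjmxM adjmxK !mulmxA.
exact: rowform_ge0.
Qed.

Lemma psd_add n (A B : 'M[C]_n) : psdmx A -> psdmx B -> psdmx (A + B).
Proof.
move=> [hA qA] [hB qB]; split; first by rewrite adjmxD hA hB.
by move=> v; rewrite mulmxDr mulmxDl mxE addr_ge0.
Qed.

Lemma psd0 n : psdmx (0 : 'M[C]_n).
Proof.
split; first by apply/matrixP => i j; rewrite !mxE rmorph0.
by move=> v; rewrite mulmx0 mul0mx mxE.
Qed.

Lemma psd_sum n (I : finType) (F : I -> 'M[C]_n) :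
  (forall i, psdmx (F i)) -> psdmx (\sum_i F i).
Proof.
move=> h; apply: (big_ind (@psdmx C n)); [exact: psd0|exact: psd_add|].
by move=> i _; exact: h.
Qed.

Lemma psd_scale n a (A : 'M[C]_n) : 0 <= a -> psdmx A -> psdmx (a *: A).
Proof.
move=> a0 [hA qA]; split; first by rewrite adjmxZ hA geC0_conj.
by move=> v; rewrite -scalemxAr -scalemxAl mxE mulr_ge0.
Qed.


Lemma qdelta n (A : 'M[C]_n) i j :
  ((delta_mx 0 i : 'rV[C]_n) *m A *m adjmx (delta_mx 0 j : 'rV[C]_n)) 0 0 = A i j.
Proof.
rewrite qformE (bigD1 i) //= [X in _ + X]big1 => [|k ki]; last first.
  by apply: big1 => l _; rewrite !mxE (negbTE ki) andbF !mul0r.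
rewrite addr0 (bigD1 j) //= [X in _ + X]big1 => [|l lj]; last first.
  by rewrite !mxE (negbTE lj) andbF rmorph0 mulr0.
by rewrite !mxE !eqxx /= ?rmorph1 ?addr0 ?mul1r ?mulr1.
Qed.

Lemma qdelta' n (A : 'M[C]_n) i j :
  \sum_k ((delta_mx 0 i : 'rV[C]_n) *m A) 0 k * adjmx (delta_mx 0 j : 'rV[C]_n) k 0
  = A i j.
Proof. by have := qdelta A i j; rewrite mxE. Qed.

Lemma qform2 n (A : 'M[C]_n) i j s t :
  let v := s *: (delta_mx 0 i : 'rV[C]_n) + t *: delta_mx 0 j in
  (v *m A *m adjmx v) 0 0 =
  s * s^* * A i i + s * t^* * A i j + t * s^* * A j i + t * t^* * A j j.
Proof.
rewrite /= adjmxD !adjmxZ !mulmxDl !mulmxDr.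
rewrite -!scalemxAl -!scalemxAr !mxE !qdelta'.
by rewrite !mulrA !addrA.
Qed.

Lemma psd_diag n (A : 'M[C]_n) i : psdmx A -> 0 <= A i i.
Proof. by move=> [_ q]; have := q (delta_mx 0 i : 'rV[C]_n); rewrite qdelta. Qed.

Lemma psd_herm n (A : 'M[C]_n) i j : psdmx A -> A j i = (A i j)^*.
Proof. by move=> [h _]; rewrite -{1}h mxE mxE. Qed.

Lemma psd_row0 n (A : 'M[C]_n) i j : psdmx A -> A i i = 0 -> A i j = 0.
Proof.
move=> pA Aii.
have [<-|ij] := eqVneq i j; first exact: Aii.
have [/eqP -> //|a0] := boolP (A i j == 0); exfalso.
pose a := A i j.
pose x := A j j.
have x0 : 0 <= x by exact: psd_diag.
pose s := - (x + 1) / (2 * a).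
have sa : s * a = - ((x + 1) / 2).
  by rewrite /s /a; field.
have := qform2 A i j s 1; rewrite Aii mulr0 add0r rmorph1 !mulr1 !mul1r.
have cj : (- ((x + 1) / 2))^* = - ((x + 1) / 2).
  rewrite rmorphN; congr (- _); apply: geC0_conj.
  by rewrite divr_ge0 ?ler0n // addr_ge0 ?ler01.
have e : s^* * a^* = - ((x + 1) / 2) by rewrite -cj -sa; exact/esym/rmorphM.
rewrite (psd_herm i j pA) -/a -/x e sa.
move=> /= eq; have := pA.2 (s *: (delta_mx 0 i : 'rV[C]_n) + 1 *: delta_mx 0 j).
rewrite eq.
have -> : - ((x + 1) / 2) + - ((x + 1) / 2) + x = -1 by field.
by rewrite oppr_ge0 ler10.
Qed.


Lemma psd_col0 n (A : 'M[C]_n) i j : psdmx A -> A i i = 0 -> A j i = 0.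
Proof. by move=> pA Aii; rewrite (psd_herm i j pA) (psd_row0 j pA Aii) rmorph0. Qed.

Lemma psd_tr_ge0 n (A : 'M[C]_n) : psdmx A -> 0 <= \tr A.
Proof. by move=> pA; rewrite /mxtrace sumr_ge0 // => i _; exact: psd_diag. Qed.

Lemma psd_tr0 n (A : 'M[C]_n) : psdmx A -> \tr A = 0 -> A = 0.
Proof.
move=> pA /psumr_eq0P h.
have d0 i : A i i = 0 by apply: h => // j _; exact: psd_diag.
by apply/matrixP => i j; rewrite mxE; apply: psd_row0.
Qed.

Lemma qform_eq n (A : 'M[C]_n) (x y : 'rV[C]_n) :
  (forall j k, A j k != 0 -> x 0 j = y 0 j /\ x 0 k = y 0 k) ->
  (x *m A *m adjmx x) 0 0 = (y *m A *m adjmx y) 0 0.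
Proof.
move=> h; rewrite !qformE; apply: eq_bigr => j _; apply: eq_bigr => k _.
have [->|/h [-> ->] //] := eqVneq (A j k) 0.
by rewrite !mulr0 !mul0r.
Qed.

Lemma adj_col_mul m1 m2 n (U : 'M[C]_(m1, n)) (V : 'M[C]_(m2, n)) :
  adjmx (col_mx U V) *m col_mx U V = adjmx U *m U + adjmx V *m V.
Proof. by rewrite /adjmx map_col_mx tr_col_mx mul_row_col. Qed.

End Q.
Section Q.
Variable C : numClosedFieldType.

Lemma adjmxB m n (A B : 'M[C]_(m, n)) : adjmx (A - B) = adjmx A - adjmx B.
Proof. by apply/matrixP => i j; rewrite !mxE rmorphB. Qed.

Lemma rank1E n (u : 'rV[C]_n) i j : (adjmx u *m u) i j = (u 0 i)^* * u 0 j.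
Proof. by rewrite !mxE big_ord1 !mxE. Qed.

Lemma psd_fact n (A : 'M[C]_n) : psdmx A ->
  exists m (U : 'M[C]_(m, n)), A = adjmx U *m U.
Proof.
suff H : forall k (A : 'M[C]_n), psdmx A ->
    (forall i j : 'I_n, ((i < n - k) || (j < n - k))%N -> A i j = 0) ->
    exists m (U : 'M[C]_(m, n)), A = adjmx U *m U.
  by move=> pA; apply: (H n) => // i j; rewrite subnn.
elim=> [|k IH] {}A pA Z.
  by exists 0%N, 0; apply/matrixP => i j; rewrite mxE big_ord0 Z // subn0 ltn_ord.
have [nk|kn] := leqP n k.
  apply: IH => // i j; have -> : (n - k = 0)%N by apply/eqP; rewrite subn_eq0.
  by rewrite !ltn0.
pose s := (n - k.+1)%N.
have ss : (s < n)%N by rewrite /s; lia.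
pose idx := Ordinal ss.
have key : forall i : 'I_n, (i < n - k)%N -> (i < s)%N \/ i = idx.
  move=> i; have -> : (n - k = s.+1)%N by rewrite /s; lia.
  rewrite ltnS leq_eqVlt => /orP[/eqP e|]; [right; exact: val_inj|by left].
have Zs : forall i j : 'I_n, ((i < s) || (j < s))%N -> A i j = 0.
  by move=> i j h; apply: Z.
have [d0|dn0] := eqVneq (A idx idx) 0.
  apply: IH => // i j /orP[/key[hi|->]|/key[hj|->]].
  - by apply: Zs; rewrite hi.
  - exact: psd_row0.
  - by apply: Zs; rewrite hj orbT.
  - exact: psd_col0.
pose d := A idx idx.
have d0 : 0 <= d by exact: psd_diag.
have dc : d^* = d by exact: geC0_conj.
pose c := d^-1.
have c0 : 0 <= c by rewrite invr_ge0.
pose u := row idx A.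
pose A' := A - c *: (adjmx u *m u).
have A'E i j : A' i j = A i j - c * ((A idx i)^* * A idx j).
  by rewrite !mxE big_ord1 !mxE.
have Z' : forall i j : 'I_n, ((i < n - k) || (j < n - k))%N -> A' i j = 0.
  move=> i j /orP[/key[hi|->]|/key[hj|->]].
  - rewrite A'E [A i j]Zs ?hi // [A idx i]Zs ?hi ?orbT //.
    by rewrite rmorph0 !mul0r mulr0 subrr.
  - by rewrite A'E -/d dc mulrA mulVf // mul1r subrr.
  - rewrite A'E [A i j]Zs ?hj ?orbT // [A idx j]Zs ?hj ?orbT //.
    by rewrite !mulr0 subrr.
  - by rewrite A'E (psd_herm idx i pA) -/d mulrCA mulVf // mulr1 subrr.
have pA' : psdmx A'.
  split.
    rewrite adjmxB adjmxZ adjmxM adjmxK (geC0_conj c0).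
    by rewrite pA.1.
  move=> v.
  pose w := v - ((v *m adjmx u) 0 0 / d) *: (delta_mx 0 idx : 'rV[C]_n).
  have idxk : (idx < n - k)%N by rewrite /= /s; lia.
  have rz : forall j, A' idx j = 0 by move=> j; apply: Z'; rewrite idxk.
  have cz : forall j, A' j idx = 0 by move=> j; apply: Z'; rewrite idxk orbT.
  rewrite (qform_eq (y := w)); last first.
    move=> j l h; rewrite !mxE.
    have jn : j != idx by apply: contraNneq h => ->; rewrite rz.
    have ln : l != idx by apply: contraNneq h => ->; rewrite cz.
    by rewrite (negbTE jn) (negbTE ln) !andbF !mulr0 !subr0.
  have wu : w *m adjmx u = 0.
    apply/matrixP => i j; rewrite !ord1 [RHS]mxE.
    rewrite mulmxBl -scalemxAl -rowE !mxE -/d dc.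
    by rewrite mulfVK // subrr.
  rewrite /A' mulmxBr mulmxBl -scalemxAr -scalemxAl !mulmxA wu.
  by rewrite !mul0mx scaler0 subr0; exact: pA.2.
have [m [U' hU']] := IH A' pA' Z'.
pose r := sqrtC c.
exists (m + 1)%N, (col_mx U' (r *: u)).
rewrite adj_col_mul -hU' adjmxZ -scalemxAl -scalemxAr scalerA.
have -> : r^* * r = c.
  by rewrite geC0_conj ?sqrtC_ge0 // -expr2 sqrtCK.
by rewrite /A' subrK.
Qed.

End Q.
Section Q.
Variable C : numClosedFieldType.

Lemma conjM (x y : C) : (x * y)^* = x^* * y^*.
Proof. exact: rmorphM. Qed.

Lemma conj_id1 k (a c : 'I_k) : ((1%:M : 'M[C]_k) a c)^* = (1%:M : 'M[C]_k) a c.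
Proof. by rewrite !mxE; case: (a == c); rewrite ?rmorph1 ?rmorph0. Qed.

Lemma tripleE m n p q (P : 'M[C]_(m, n)) (Y : 'M[C]_(n, p)) (Q : 'M[C]_(p, q)) i j :
  (P *m Y *m Q) i j = \sum_x \sum_y P i x * Y x y * Q y j.
Proof.
rewrite mxE exchange_big /=; apply: eq_bigr => y _.
by rewrite mxE mulr_suml.
Qed.

Lemma sum_id1 k (a : 'I_k) (F : 'I_k -> C) :
  \sum_c ((1%:M : 'M[C]_k) a c * F c) = F a.
Proof.
rewrite (bigD1 a) //= big1 => [|c ca]; last by rewrite mxE eq_sym (negbTE ca) mul0r.
by rewrite mxE eqxx mul1r addr0.
Qed.

Lemma id_tens_kraus k m n (K : 'M[C]_(n, m)) (X : 'M[C]_(k * m)) :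
  id_tens (fun Y => K *m Y *m adjmx K) X =
  ((1%:M : 'M[C]_k) *t K) *m X *m adjmx ((1%:M : 'M[C]_k) *t K).
Proof.
apply/matrixP => i j.
case: (mxtens_indexP i) => a b; case: (mxtens_indexP j) => a' b'.
rewrite [LHS]mxE !mxtens_indexK /= tripleE tripleE sum_tens.
rewrite (eq_bigr (fun c => \sum_e \sum_y (1%:M : 'M[C]_k) a c *
   (K b e * X (mxtens_index (c, e)) y * (adjmx ((1%:M : 'M[C]_k) *t K)) y (mxtens_index (a', b'))))); last first.
  move=> c _; apply: eq_bigr => e _; apply: eq_bigr => y _.
  by rewrite tensmxE -!mulrA.
rewrite (eq_bigr (fun c => (1%:M : 'M[C]_k) a c * \sum_e \sum_y 
   (K b e * X (mxtens_index (c, e)) y * (adjmx ((1%:M : 'M[C]_k) *t K)) y (mxtens_index (a', b'))))); last first.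
  by move=> c _; rewrite mulr_sumr; apply: eq_bigr => e _; rewrite mulr_sumr.
rewrite sum_id1; apply: eq_bigr => e _.
rewrite sum_tens.
rewrite (eq_bigr (fun c => (1%:M : 'M[C]_k) a' c * \sum_e' 
   (K b e * X (mxtens_index (a, e)) (mxtens_index (c, e')) * (K b' e')^*))); last first.
  move=> c _; rewrite mulr_sumr; apply: eq_bigr => e' _.
  rewrite adjmxE tensmxE conjM conj_id1.
  by rewrite mulrCA mulrA.
rewrite sum_id1 /blockmx; apply: eq_bigr => e' _.
by rewrite !mxE.
Qed.

End Q.
Section Q.
Variable C : numClosedFieldType.

Lemma psd_conjmx m n (T : 'M[C]_(m, n)) (X : 'M[C]_n) :
  psdmx X -> psdmx (T *m X *m adjmx T).
Proof.
move=> [hX qX]; split; first by rewrite !adjmxM adjmxK hX mulmxA.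
move=> v; have := qX (v *m T); by rewrite adjmxM !mulmxA.
Qed.

Lemma cp_kraus m n (K : 'M[C]_(n, m)) : cp_map (fun Y => K *m Y *m adjmx K).
Proof.
split.
  by move=> a X Y; rewrite mulmxDr mulmxDl -scalemxAr -scalemxAl.
by move=> k X pX; rewrite id_tens_kraus; exact: psd_conjmx.
Qed.

Lemma cp_ext m n (G H : 'M[C]_m -> 'M[C]_n) :
  (forall X, G X = H X) -> cp_map G -> cp_map H.
Proof.
move=> e [lG pG]; split; first by move=> a X Y; rewrite -!e.
move=> k X pX; have -> : id_tens H X = id_tens G X.
  by apply/matrixP => i j; rewrite !mxE e.
exact: pG.
Qed.

Lemma cp_sum m n (I : finType) (G : I -> 'M[C]_m -> 'M[C]_n) :
  (forall i, cp_map (G i)) -> cp_map (fun X => \sum_i G i X).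
Proof.
move=> h; split.
  move=> a X Y; rewrite scaler_sumr -big_split /=; apply: eq_bigr => i _.
  by have [l _] := h i; rewrite l.
move=> k X pX; have -> : id_tens (fun X => \sum_i G i X) X = \sum_i id_tens (G i) X.
  by apply/matrixP => a b; rewrite mxE !summxE; apply: eq_bigr => i _; rewrite mxE.
by apply: psd_sum => i; have [_ p] := h i; exact: p.
Qed.

Lemma cp_scale m n a (G : 'M[C]_m -> 'M[C]_n) :
  0 <= a -> cp_map G -> cp_map (fun X => a *: G X).
Proof.
move=> a0 [l p]; split.
  by move=> b X Y; rewrite l scalerDr !scalerA mulrC.
move=> k X pX; have -> : id_tens (fun X => a *: G X) X = a *: id_tens G X.
  by apply/matrixP => i j; rewrite !mxE.
exact/psd_scale/p.
Qed.

Definition Phi dC dB (w : 'M[C]_(dC * dB)) (X : 'M[C]_dC) : 'M[C]_dB :=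
  \matrix_(b, b') \sum_c \sum_c' X c c' * w (mxtens_index (c, b)) (mxtens_index (c', b')).

Lemma cp_Phi dC dB (w : 'M[C]_(dC * dB)) : psdmx w -> cp_map (Phi w).
Proof.
move=> /psd_fact [m [U ->]].
pose K (j : 'I_m) : 'M[C]_(dB, dC) := \matrix_(b, c) (U j (mxtens_index (c, b)))^*.
apply: (cp_ext (G := fun X => \sum_j K j *m X *m adjmx (K j))); last first.
  by apply: cp_sum => j; exact: cp_kraus.
move=> X; apply/matrixP => b b'; rewrite summxE mxE.
rewrite (eq_bigr (fun j => \sum_c \sum_c' (K j b c * X c c' * adjmx (K j) c' b'))); last first.
  by move=> j _; rewrite tripleE.
rewrite exchange_big; apply: eq_bigr => c _.
rewrite exchange_big; apply: eq_bigr => c' _.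
rewrite mxE mulr_sumr; apply: eq_bigr => j _.
rewrite !mxE conjCK; rewrite !mulrA; congr (_ * _).
by rewrite mulrC.
Qed.

End Q.
Section Q.
Variable C : numClosedFieldType.

Lemma tr_delta n (c : 'I_n) : \tr (delta_mx c c : 'M[C]_n) = 1.
Proof.
rewrite /mxtrace (bigD1 c) //= big1 => [|i ic]; last by rewrite mxE (negbTE ic).
by rewrite mxE eqxx addr0.
Qed.

Lemma block_psi d (c c' : 'I_d) :
  blockmx (psi_plus C d) c c' = (d%:R)^-1 *: delta_mx c c'.
Proof.
apply/matrixP => b e; rewrite !mxE !mxtens_indexK /=.
rewrite [b == c]eq_sym [e == c']eq_sym.
by case: (c == b); case: (c' == e); rewrite /= ?mulr1 ?mulr0.
Qed.

Lemma choiE m n (G : 'M[C]_m -> 'M[C]_n) c c' y y' :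
  choi G (mxtens_index (c, y)) (mxtens_index (c', y')) =
  G ((m%:R)^-1 *: delta_mx c c') y y'.
Proof. by rewrite /choi /id_tens mxE !mxtens_indexK /= block_psi. Qed.

Lemma lin_recon m n (G : 'M[C]_m -> 'M[C]_n) (X : 'M[C]_m) :
  is_linear_map G ->
  G X = \sum_c \sum_c' X c c' *: G (delta_mx c c').
Proof.
move=> lG; rewrite {1}(matrix_sum_delta X) lin_sum //; apply: eq_bigr => c _.
by rewrite lin_sum //; apply: eq_bigr => c' _; rewrite linZ.
Qed.

Lemma choi_delta m n (G : 'M[C]_m -> 'M[C]_n) c c' y y' :
  (0 < m)%N -> is_linear_map G ->
  G (delta_mx c c') y y' = m%:R * choi G (mxtens_index (c, y)) (mxtens_index (c', y')).
Proof.
move=> m0 lG; rewrite choiE linZ // mxE mulrA mulfV ?mul1r //.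
by rewrite pnatr_eq0 -lt0n.
Qed.

Lemma prodE dC dA dB (tau : 'M[C]_dA) (w : 'M[C]_(dC * dB)) c a b c' a' b' :
  prod_A_BCp tau w (mxtens_index (c, mxtens_index (a, b)))
    (mxtens_index (c', mxtens_index (a', b'))) =
  tau a a' * w (mxtens_index (c, b)) (mxtens_index (c', b')).
Proof. by rewrite mxE !mxtens_indexK. Qed.

Lemma ptrace1_tens dA dB (A : 'M[C]_dA) (B : 'M[C]_dB) :
  ptrace1 (A *t B) = \tr A *: B.
Proof.
apply/matrixP => b b'; rewrite !mxE /mxtrace mulr_suml; apply: eq_bigr => a _.
by rewrite tensmxE.
Qed.

Lemma ptrace1_sum dA dB (I : finType) (F : I -> 'M[C]_(dA * dB)) :
  ptrace1 (\sum_i F i) = \sum_i ptrace1 (F i).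
Proof.
apply: (big_ind2 (fun x y => ptrace1 x = y)).
- by apply/matrixP => b b'; rewrite !mxE big1 // => a _; rewrite mxE.
- move=> x1 x2 y1 y2 <- <-; apply/matrixP => b b'; rewrite !mxE -big_split.
  by apply: eq_bigr => a _; rewrite mxE.
- by [].
Qed.

End Q.
Section Q.
Variable C : numClosedFieldType.

Lemma psd_psi d : psdmx (psi_plus C d).
Proof.
pose u : 'rV[C]_(d * d) :=
  \row_k (((mxtens_unindex k).1 == (mxtens_unindex k).2)%:R).
have -> : psi_plus C d = (d%:R)^-1 *: (adjmx u *m u).
  apply/matrixP => i j; rewrite [RHS]mxE rank1E !mxE.
  case: (_ == _); case: (_ == _); by rewrite /= ?rmorph1 ?rmorph0 ?mulr1 ?mulr0 ?mul0r.
apply: psd_scale; last exact: psd_adj.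
by rewrite invr_ge0 ler0n.
Qed.

Lemma tr_choi m n (G : 'M[C]_m -> 'M[C]_n) :
  \tr (choi G) = \sum_c \tr (G ((m%:R)^-1 *: delta_mx c c)).
Proof.
rewrite /mxtrace sum_tens; apply: eq_bigr => c _.
by apply: eq_bigr => y _; rewrite choiE.
Qed.

Lemma channel_ext m n (G H : 'M[C]_m -> 'M[C]_n) :
  (forall X, G X = H X) -> channel G -> channel H.
Proof.
move=> e [cG tG]; split; first exact: cp_ext cG.
by move=> X; rewrite -e.
Qed.

Lemma density_rank1 n (i : 'I_n) : density (delta_mx i i : 'M[C]_n).
Proof.
split; last exact: tr_delta.
have -> : (delta_mx i i : 'M[C]_n) = adjmx (delta_mx 0 i : 'rV[C]_n) *m delta_mx 0 i.
  apply/matrixP => a b; rewrite rank1E !mxE !eqxx /=.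
  by rewrite conjC_nat -natrM mulnb.
exact: psd_adj.
Qed.

Lemma prod_scale dC dA dB (tau : 'M[C]_dA) (w : 'M[C]_(dC * dB)) a :
  prod_A_BCp tau (a *: w) = a *: prod_A_BCp tau w.
Proof. by apply/matrixP => i j; rewrite !mxE /= !mxE mulrCA. Qed.

Lemma prod_0 dC dA dB (tau : 'M[C]_dA) :
  prod_A_BCp tau (0 : 'M[C]_(dC * dB)) = 0.
Proof. by apply/matrixP => i j; rewrite !mxE /= !mxE mulr0. Qed.

End Q.
Section Q.
Variable C : numClosedFieldType.

Lemma fwd dA dB dC (hB : (0 < dB)%N) (hC : (0 < dC)%N)
  (Lab : 'M[C]_dC -> 'M[C]_(dA * dB)) :
  incoherent_extension Lab -> separable_A_BCp (choi Lab).
Proof.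
case=> I [L [sigma [[cpL chL] [dS eq]]]].
pose p i := \tr (choi (L i)).
have pJ i : psdmx (choi (L i)) := (cpL i).2 dC (psi_plus C dC) (psd_psi C dC).
have p0 i : 0 <= p i := psd_tr_ge0 (pJ i).
have hCB : (0 < dC * dB)%N by rewrite muln_gt0 hC hB.
pose o : 'I_(dC * dB) := Ordinal hCB.
pose w i := if p i == 0 then (delta_mx o o : 'M[C]_(dC * dB))
            else (p i)^-1 *: choi (L i).
exists I, p, sigma, w; split; first by [].
split.
  rewrite /p (eq_bigr _ (fun i _ => tr_choi (L i))) exchange_big /=.
  rewrite (eq_bigr (fun=> (dC%:R)^-1)) => [|c _]; last first.
    rewrite -raddf_sum; have := chL.2 ((dC%:R)^-1 *: delta_mx c c) => /= ->.
    by rewrite mxtraceZ tr_delta mulr1.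
  have d0 : (dC%:R : C) != 0 by rewrite pnatr_eq0 -lt0n.
  by rewrite sumr_const card_ord -mulr_natr; field.
split.
  move=> i; split; first exact: dS.
  rewrite /w; case: eqP => h; first exact: density_rank1.
  split; first by apply: psd_scale; [rewrite invr_ge0|].
  by rewrite mxtraceZ mulVf //; apply/eqP.
have e1 i : p i *: prod_A_BCp (sigma i) (w i) = prod_A_BCp (sigma i) (choi (L i)).
  rewrite /w; case: eqP => h.
    by rewrite h scale0r (psd_tr0 (pJ i) h) prod_0.
  by rewrite prod_scale scalerA mulfV ?scale1r //; apply/eqP.
rewrite (eq_bigr _ (fun i _ => e1 i)).
apply/matrixP => x y.
case: (mxtens_indexP x) => c z; case: (mxtens_indexP z) => a b.
case: (mxtens_indexP y) => c' z'; case: (mxtens_indexP z') => a' b'.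
rewrite choiE eq !summxE; apply: eq_bigr => i _.
by rewrite tensmxE prodE choiE.
Qed.

End Q.
Section Q.
Variable C : numClosedFieldType.

Lemma rev_dir dA dB dC (hC : (0 < dC)%N)
  (Lb : 'M[C]_dC -> 'M[C]_dB) (Lab : 'M[C]_dC -> 'M[C]_(dA * dB)) :
  channel Lb -> channel_extension Lab Lb ->
  separable_A_BCp (choi Lab) -> incoherent_extension Lab.
Proof.
move=> chLb [chLab ext].
case=> I [p [tau [w [p0 [ps1 [dens eq]]]]]].
have lin : is_linear_map Lab := chLab.1.1.
pose L i := fun X => (dC%:R * p i) *: Phi (w i) X.
have key : forall X, Lab X = \sum_i tau i *t L i X.
  move=> X; apply/matrixP => y y'.
  case: (mxtens_indexP y) => a b; case: (mxtens_indexP y') => a' b'.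
  rewrite (lin_recon X lin) summxE.
  under eq_bigr do rewrite summxE.
  under eq_bigr do under eq_bigr do rewrite mxE (choi_delta _ _ _ _ hC lin) eq summxE.
  rewrite summxE /L.
  under eq_bigr do under eq_bigr do under eq_bigr do rewrite mxE prodE.
  under [RHS]eq_bigr do rewrite tensmxE mxE mxE !mulr_sumr.
  rewrite [RHS]exchange_big /=; apply: eq_bigr => c _.
  under [RHS]eq_bigr do rewrite !mulr_sumr.
  rewrite [RHS]exchange_big /=; apply: eq_bigr => c' _.
  rewrite !mulr_sumr; apply: eq_bigr => k _.
  ring.
exists I, L, tau; split; last first.
  by split=> // i; exact: (dens i).1.
split.
  move=> i; apply: cp_scale; first by rewrite mulr_ge0 ?ler0n.
  exact: cp_Phi (dens i).2.1.
apply: (channel_ext _ chLb) => X.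
rewrite -ext key ptrace1_sum; apply: eq_bigr => i _.
by rewrite ptrace1_tens (dens i).1.2 scale1r.
Qed.

Theorem theorem2_gen dA dB dC (hB : (0 < dB)%N) (hC : (0 < dC)%N)
  (Lb : 'M[C]_dC -> 'M[C]_dB) (Lab : 'M[C]_dC -> 'M[C]_(dA * dB)) :
  channel Lb -> channel_extension Lab Lb ->
  (incoherent_extension Lab <-> separable_A_BCp (choi Lab)).
Proof.
move=> chLb ext; split; first by apply: fwd.
exact: (rev_dir hC chLb ext).
Qed.

End Q.

Unset Implicit Arguments.

Theorem theorem2 (R : realType) (dA dB dC : nat)
  (hA : (0 < dA)%N) (hB : (0 < dB)%N) (hC : (0 < dC)%N)
  (Lb : 'M[R[i]]_dC -> 'M[R[i]]_dB)
  (Lab : 'M[R[i]]_dC -> 'M[R[i]]_(dA * dB)) :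
  channel Lb -> channel_extension Lab Lb ->
  (incoherent_extension Lab <-> separable_A_BCp (choi Lab)).
Proof.
move=> chLb ext.
exact: (theorem2_gen hB hC chLb ext).
Qed.
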